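(* Let $d\ge 1$ and $n\ge 1$ be integers, let $\vec\alpha_1,\dots,\vec\alpha_n\in\mathbb{T}^d=\mathbb{R}^d/\mathbb{Z}^d$ (viewed as elements of $[0,1)^d$) be arbitrary, and let $Q$ be the probability measure on $\mathbb{T}^d$ assigning mass $\frac{1}{2n}$ to each of the points $+\vec\alpha_i$ and $-\vec\alpha_i$, $i=1,\dots,n$ (counted with multiplicity), i.e. $Q=\frac{1}{2n}\sum_{i=1}^n(\delta_{\vec\alpha_i}+\delta_{-\vec\alpha_i})$. Then for every positive integer $k$, the $k$-th convolution power $Q^{*k}$ satisfies $$D(Q^{*k})\ \ge\ \frac{1}{\pi^d\, 5^{n+1}\, d^{n/2}}\; k^{-n/2}.$$
   Context: $Q^{*k}$ is the $k$-fold convolution of $Q$ on the additive group $\mathbb{T}^d$; it is the distribution after $k$ steps of the random walk started at $\vec 0$ which at each step picks one of the $\vec\alpha_i$ uniformly at random and adds or subtracts it (each with probability $1/2$), coordinates taken mod 1. Let $U$ denote Haar (uniform Lebesgue) measure on $\mathbb{T}^d$. A box in $\mathbb{T}^d$ is a set of the form $[a_1,b_1)\times\cdots\times[a_d,b_d)$ (sides parallel to the axes, interpreted mod 1). The discrepancy of a probability measure $P$ on $\mathbb{T}^d$ is $D(P)=\sup_{B\text{ box}}|P(B)-U(B)|$. *)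

(* Defs.v *)
From HB Require Import structures.
From mathcomp Require Import all_boot all_order all_algebra.
From mathcomp Require Import all_classical all_reals all_analysis.
Set Implicit Arguments. Unset Strict Implicit. Unset Printing Implicit Defensive.
Import Order.TTheory GRing.Theory Num.Theory.
Local Open Scope ring_scope.
Local Open Scope classical_set_scope.

Definition frac {R : realType} (x : R) : R := x - (Num.floor x)%:~R.

(* Box in T^d with "lower corner" a and side lengths l (0 <= l j <= 1):
   the set of x with x_j in [a_j, a_j + l_j) mod 1 for every j. *)
Definition in_box {R : realType} (d : nat) (a l : 'I_d -> R) (x : 'I_d -> R) : bool :=
  [forall j, frac (x j - a j) < l j].

Definition is_box_len {R : realType} (d : nat) (l : 'I_d -> R) : Prop :=
  forall j, 0 <= l j <= 1.

Definition box_vol {R : realType} (d : nat) (l : 'I_d -> R) : R := \prod_(j < d) l j.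

Definition walk_pos {R : realType} (d n k : nat) (alpha : 'I_n -> 'I_d -> R)
  (w : {ffun 'I_k -> 'I_n * bool}) : 'I_d -> R :=
  fun j => \sum_(t < k) (if (w t).2 then alpha (w t).1 j else - alpha (w t).1 j).

(* Q^{*k}(B): the k steps choose (i, sign) uniformly among 2n possibilities,
   independently; so Q^{*k}(B) = #{walks ending in B} / (2n)^k. *)
Definition convpow_box {R : realType} (d n k : nat) (alpha : 'I_n -> 'I_d -> R)
  (a l : 'I_d -> R) : R :=
  (#|[set w : {ffun 'I_k -> 'I_n * bool} | in_box a l (walk_pos alpha w)]|)%:R
  / ((2 * n) ^ k)%:R.

Definition discrepancy_convpow {R : realType} (d n k : nat) (alpha : 'I_n -> 'I_d -> R) : R :=
  sup [set r : R | exists a l : 'I_d -> R,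
         is_box_len l /\ r = `| @convpow_box R d n k alpha a l - box_vol l |].

(* Main.v *)
Require Import Defs.
From HB Require Import structures.
From mathcomp Require Import all_boot all_order all_algebra.
From mathcomp Require Import all_classical all_reals all_analysis.
From mathcomp Require Import zify ring lra.
Import Order.TTheory GRing.Theory Num.Theory.
Local Open Scope ring_scope.

Definition sgz (b : bool) : int := if b then 1 else -1.
Definition ez {n : nat} (x : 'I_n * bool) (i : 'I_n) : int :=
  if x.1 == i then sgz x.2 else 0.
Definition cz {n k : nat} (w : {ffun 'I_k -> 'I_n * bool}) (i : 'I_n) : int :=
  \sum_(t < k) ez (w t) i.

Definition flipw {n k : nat} (t : 'I_k) (w : {ffun 'I_k -> 'I_n * bool}) :
  {ffun 'I_k -> 'I_n * bool} :=
  [ffun u => if u == t then ((w u).1, ~~ (w u).2) else w u].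

Lemma flipwK n k t : involutive (@flipw n k t).
Proof.
move=> w; apply/ffunP => u; rewrite /flipw !ffunE; case: eqP => [->|] //=.
by rewrite negbK; case: (w t).
Qed.

Lemma offdiag n k (t t' : 'I_k) : t != t' ->
  \sum_(w : {ffun 'I_k -> 'I_n * bool}) \sum_(i < n) ez (w t) i * ez (w t') i = 0.
Proof.
move=> htt.
set X := \sum_(w : {ffun 'I_k -> 'I_n * bool}) _.
have : X = - X.
  rewrite {1}/X (reindex_inj (inv_inj (@flipwK n k t))) /X -sumrN.
  apply: eq_bigr => w _; rewrite -sumrN; apply: eq_bigr => i _.
  have ht't : (t' == t) = false by rewrite eq_sym (negbTE htt).
  rewrite /flipw !ffunE eqxx ht't.
  rewrite /ez /=; case: eqP => _; last by rewrite !mul0r oppr0.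
  rewrite /sgz; case: (w t).2 => /=; ring.
lia.
Qed.

Lemma diag n k (t : 'I_k) (w : {ffun 'I_k -> 'I_n * bool}) :
  \sum_(i < n) ez (w t) i * ez (w t) i = 1.
Proof.
rewrite (bigD1 (w t).1) //= big1 ?addr0.
  by rewrite /ez eqxx /sgz; case: (w t).2.
by move=> i hi; rewrite /ez eq_sym (negbTE hi) mul0r.
Qed.

Lemma second_moment n k :
  \sum_(w : {ffun 'I_k -> 'I_n * bool}) \sum_(i < n) (cz w i) ^+ 2
  = (k * #|{ffun 'I_k -> 'I_n * bool}|)%:R.
Proof.
have -> : \sum_(w : {ffun 'I_k -> 'I_n * bool}) \sum_(i < n) (cz w i) ^+ 2
   = \sum_(t < k) \sum_(t' < k) \sum_(w : {ffun 'I_k -> 'I_n * bool})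
        \sum_(i < n) ez (w t) i * ez (w t') i.
  transitivity (\sum_(w : {ffun 'I_k -> 'I_n * bool}) \sum_(t < k) \sum_(t' < k)
        \sum_(i < n) ez (w t) i * ez (w t') i).
    apply: eq_bigr => w _.
    transitivity (\sum_(i < n) \sum_(t < k) \sum_(t' < k) ez (w t) i * ez (w t') i).
      apply: eq_bigr => i _; rewrite /cz expr2 mulr_suml; apply: eq_bigr => t' _.
      by rewrite mulr_sumr.
    rewrite exchange_big /=; apply: eq_bigr => t _.
    by rewrite exchange_big.
  rewrite exchange_big /=; apply: eq_bigr => t _.
  by rewrite exchange_big.
under eq_bigr => t _.
  rewrite (bigD1 t) //= [X in _ + X]big1; last first.
    by move=> t' ht'; apply: offdiag; rewrite eq_sym.
  rewrite addr0; under eq_bigr do rewrite diag.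
  over.
rewrite /= sumr_const card_ord sumr_const.
by rewrite natrM mulr_natl -mulr_natr -mulr_natl.
Qed.

Lemma cardW n k : #|{ffun 'I_k -> 'I_n * bool}| = ((2 * n) ^ k)%N.
Proof. by rewrite card_ffun card_prod card_bool !card_ord mulnC. Qed.

Lemma exists_fiber n k (hn : (0 < n)%N) (hk : (0 < k)%N) :
  exists (c : 'I_n -> int) (M : nat), (M * M <= 2 * k)%N /\
   ((2 * n) ^ k <= 2 * (M.*2.+1) ^ n *
      #|[set w : {ffun 'I_k -> 'I_n * bool} | [forall i, cz w i == c i]]|)%N.
Proof.
pose Q (w : {ffun 'I_k -> 'I_n * bool}) := \sum_(i < n) (cz w i) ^+ 2.
pose bad := [set w : {ffun 'I_k -> 'I_n * bool} | (2 * k)%:R < Q w].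
have hQ0 : forall w, 0 <= Q w by move=> w; apply: sumr_ge0 => i _; exact: sqr_ge0.
have markov : ((#|bad| * (2 * k).+1)%:R : int) <= (k * #|{ffun 'I_k -> 'I_n * bool}|)%:R.
  rewrite -second_moment.
  apply: (@le_trans _ _ (\sum_(w in bad) Q w)).
    rewrite natrM mulr_natl -sumr_const; apply: ler_sum => w.
    rewrite inE => hw; lia.
  rewrite [X in _ <= X](bigID (fun w => w \in bad)) /= lerDl.
  by apply: sumr_ge0 => w _; exact: hQ0.
have markov' : (#|bad| * (2 * k).+1 <= k * #|{ffun 'I_k -> 'I_n * bool}|)%N.
  by rewrite -(ler_nat int).
have hS : (#|{ffun 'I_k -> 'I_n * bool}| <= 2 * #|~: bad|)%N.
  have hc := cardsC bad; move: hc markov'; rewrite !cardW; nia.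
pose M := (\max_(m < (2 * k).+1 | (m * m <= 2 * k)%N) m)%N.
have hM : (M * M <= 2 * k)%N.
  rewrite /M; elim/big_ind: _ => //.
  by move=> x y hx hy; rewrite /maxn; case: ifP.
have hc : forall w, w \in ~: bad -> forall i, (`|cz w i| <= M)%N.
  move=> w; rewrite !inE -leNgt => hw i.
  have hi : (cz w i) ^+ 2 <= Q w.
    rewrite /Q (bigD1 i) //= lerDl; apply: sumr_ge0 => j _; exact: sqr_ge0.
  have ha : (`|cz w i| * `|cz w i| <= 2 * k)%N.
    move: hi hw; rewrite expr2; nia.
  have hlt : (`|cz w i| < (2 * k).+1)%N by nia.
  exact: (@leq_bigmax_cond _ (fun m : 'I_(2 * k).+1 => (m * m <= 2 * k)%N)
            (fun m => nat_of_ord m) (Ordinal hlt) ha).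
pose f (w : {ffun 'I_k -> 'I_n * bool}) : {ffun 'I_n -> 'I_(M.*2.+1)} :=
  [ffun i => inord (absz (cz w i + M%:Z))].
pose fib v := [set w in ~: bad | f w == v].
have hsum : #|~: bad| = (\sum_v #|fib v|)%N.
  rewrite -sum1_card (partition_big f xpredT) //=.
  apply: eq_bigr => v _; rewrite -sum1_card; apply: eq_bigl => w.
  by rewrite !inE.
pose v0 := [arg max_(v > [ffun => ord0]) #|fib v|].
have hmax : forall v, (#|fib v| <= #|fib v0|)%N.
  by rewrite /v0; case: arg_maxnP => // v1 _ h v; exact: h.
have h2 : (#|~: bad| <= (M.*2.+1) ^ n * #|fib v0|)%N.
  rewrite hsum.
  have hle : (\sum_v #|fib v| <= \sum_(v : {ffun 'I_n -> 'I_(M.*2.+1)}) #|fib v0|)%N.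
    by apply: leq_sum => v _; exact: hmax.
  apply: (leq_trans hle).
  by rewrite sum_nat_const card_ffun !card_ord.
exists (fun i => (v0 i)%:Z - M%:Z), M; split=> //.
have hsub : (#|fib v0| <= #|[set w : {ffun 'I_k -> 'I_n * bool} |
                 [forall i, cz w i == ((v0 i)%:Z - M%:Z)%R]]|)%N.
  apply: subset_leq_card; apply/fintype.subsetP => w; rewrite !inE => /andP[wS /eqP fw].
  apply/forallP => i.
  have hci : (absz (cz w i) <= M)%N by apply: hc; rewrite !inE.
  have hv : nat_of_ord (v0 i) = absz (cz w i + M%:Z).
    rewrite -fw ffunE inordK //; lia.
  apply/eqP; rewrite hv; lia.
rewrite -cardW; apply: leq_trans hS _.
rewrite -mulnA leq_mul2l /=; apply: leq_trans h2 _.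
by rewrite leq_mul2l hsub orbT.
Qed.

Lemma walk_pos_cz (R : realType) d n k (alpha : 'I_n -> 'I_d -> R)
  (w : {ffun 'I_k -> 'I_n * bool}) j :
  walk_pos alpha w j = \sum_(i < n) (cz w i)%:~R * alpha i j.
Proof.
rewrite /walk_pos /cz.
under [RHS]eq_bigr do rewrite raddf_sum /= mulr_suml.
rewrite [RHS]exchange_big /=; apply: eq_bigr => t _.
rewrite (bigD1 (w t).1) //= big1 ?addr0.
  by rewrite /ez eqxx /sgz; case: (w t).2 => /=; rewrite ?mul1r ?mulN1r.
by move=> i hi; rewrite /ez eq_sym (negbTE hi) mul0r.
Qed.

Lemma sqrt_powR (R : realType) (x : R) (n : nat) : 0 <= x ->
  powR x (n%:R / 2) = (Num.sqrt x) ^+ n.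
Proof.
move=> hx; rewrite mulrC powRrM powR12_sqrt // powR_mulrn //; exact: sqrtr_ge0.
Qed.

Theorem theorem1 (R : realType) (d n : nat) (alpha : 'I_n -> 'I_d -> R)
  (hd : (1 <= d)%N) (hn : (1 <= n)%N)
  (halpha : forall i j, 0 <= alpha i j < 1)
  (k : nat) (hk : (1 <= k)%N) :
  (pi ^+ d * 5 ^+ n.+1 * powR (d%:R) (n%:R / 2))^-1 * powR (k%:R) (- (n%:R / 2))
    <= @discrepancy_convpow R d n k alpha.
Proof.
have [c [M [hM hcnt]]] := exists_fiber _ _ hn hk.
set F := [set w : {ffun 'I_k -> 'I_n * bool} | [forall i, cz w i == c i]] in hcnt.
set m := #|F| in hcnt.
have hN0 : (0 < (2 * n) ^ k)%N by rewrite expn_gt0 muln_gt0 hn.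
have hm0 : (0 < m)%N by nia.
have /card_gt0P [w0 hw0] := hm0.
have hpos : forall w, w \in F -> walk_pos alpha w = walk_pos alpha w0.
  move=> w; rewrite inE => /forallP hw; move: hw0; rewrite inE => /forallP hw0.
  apply/funext => j; rewrite !walk_pos_cz; apply: eq_bigr => i _.
  by rewrite (eqP (hw i)) (eqP (hw0 i)).
rewrite powRN !sqrt_powR ?ler0n //.
set s := Num.sqrt k%:R; set sd := Num.sqrt d%:R.
have hs1 : 1 <= s.
  by rewrite /s -{1}sqrtr1 ler_sqrt ?ler0n // ler1n.
have hsd1 : 1 <= sd by rewrite /sd -{1}sqrtr1 ler_sqrt ?ler0n // ler1n.
have hpi1 : 1 <= pi ^+ d :> R.
  by apply: exprn_ege1; apply: le_trans (pi_ge2 R); rewrite ler1n.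
have hsdn : 1 <= sd ^+ n by exact: exprn_ege1.
have hsn : 1 <= s ^+ n by exact: exprn_ege1.
set B := (_ * _)^-1 * _.
set X := 5 ^+ n.+1 * s ^+ n.
have h5 : 1 <= 5 ^+ n.+1 :> R by apply: exprn_ege1; rewrite ler1n.
have hX1 : 1 <= X by rewrite /X; nra.
have nz : forall x : R, 1 <= x -> x != 0.
  by move=> x hx; rewrite gt_eqF // (lt_le_trans ltr01 hx).
have hBX : B * X <= 1.
  rewrite /B /X.
  set P := pi ^+ d * sd ^+ n.
  have hP : 1 <= P by rewrite /P; nra.
  have -> : (pi ^+ d * 5 ^+ n.+1 * sd ^+ n)^-1 * (s ^+ n)^-1 * (5 ^+ n.+1 * s ^+ n)
           = P^-1.
    rewrite /P; field.
    by rewrite !nz.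
  by rewrite invr_le1 // ?unitfE ?nz // (lt_le_trans ltr01).
have hB0 : 0 < B.
  have p1 : forall x : R, 1 <= x -> 0 < x by move=> x hx; exact: (lt_le_trans ltr01 hx).
  by rewrite /B mulr_gt0 // invr_gt0 ?mulr_gt0 // p1.
have hB1 : B <= 1.
  have : B <= B * X by rewrite ler_peMr // ltW.
  move=> h; exact: le_trans h hBX.
set N : R := ((2 * n) ^ k)%:R.
have hNpos : 0 < N by rewrite ltr0n.
set Y := 4 ^+ n * s ^+ n.
have hMs : (M.*2.+1)%:R <= 4 * s :> R.
  have hM' : (M%:R : R) ^+ 2 <= 2 * s ^+ 2.
    rewrite sqr_sqrtr ?ler0n // -natrX -natrM ler_nat -mulnn; exact: hM.
  have hM0 : 0 <= (M%:R : R) by rewrite ler0n.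
  rewrite -addn1 -muln2 natrD natrM; nra.
have hMY : (((M.*2.+1) ^ n)%N%:R : R) <= Y.
  by rewrite natrX /Y -exprMn lerXn2r // ?nnegrE ?ler0n // mulr_ge0 // (le_trans ler01).
have hNY : N <= 2 * Y * m%:R.
  apply: le_trans (_ : ((2 * (M.*2.+1) ^ n * m)%N%:R <= _)).
    by rewrite ler_nat.
  rewrite !natrM ler_wpM2r ?ler0n // ler_wpM2l //.
have hYX : 5 * Y <= X.
  rewrite /X /Y exprS -mulrA ler_wpM2l // ler_wpM2r ?exprn_ge0 ?(le_trans ler01) //.
  by rewrite lerXn2r // ?nnegrE // ler_nat.
have hm0R : 0 <= (m%:R : R) by rewrite ler0n.
have hY0 : 0 <= Y by rewrite /Y mulr_ge0 // exprn_ge0 // (le_trans ler01).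
have key : 2 * B <= m%:R / N.
  rewrite ler_pdivlMr //.
  have h1 : 2 * B * N <= 2 * B * (2 * Y * m%:R) by rewrite ler_wpM2l // mulr_ge0 // ltW.
  have h2 : B * (5 * Y) * m%:R <= B * X * m%:R.
    by rewrite ler_wpM2r // ler_wpM2l // ltW.
  have h3 : B * X * m%:R <= m%:R by rewrite ler_piMl.
  have h4 : 0 <= B * Y * m%:R by apply: mulr_ge0 => //; apply: mulr_ge0 => //; exact: ltW.
  nra.
pose a := walk_pos alpha w0.
pose l : 'I_d -> R := fun _ => B.
have hl : is_box_len l by move=> j; rewrite /l ltW.
have hconv : m%:R / N <= convpow_box k alpha a l.
  rewrite /convpow_box; apply: ler_wpM2r; first by rewrite invr_ge0 ltW.
  rewrite ler_nat.
  apply: subset_leq_card; apply/fintype.subsetP => w hw; rewrite inE.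
  rewrite /= (hpos w hw) /in_box; apply/forallP => j.
  by rewrite /a /l /Defs.frac subrr floor0 subr0.
have hvol : box_vol l <= B.
  rewrite /box_vol /l prodr_const card_ord.
  rewrite -(prednK hd) exprS; apply: ler_piMr; first exact: ltW.
  by apply: exprn_ile1; [exact: ltW | exact: hB1].
rewrite /discrepancy_convpow; set E := (X in sup X).
have hub : has_ubound E.
  exists 2 => r [a' [l' [hl' ->]]].
  apply: le_trans (ler_normB _ _) _.
  have h1 : `|convpow_box k alpha a' l'| <= 1.
    rewrite ger0_norm ?divr_ge0 ?ler0n // ler_pdivrMr ?ltr0n // mul1r ler_nat.
    by rewrite -cardW max_card.
  have h2 : `|box_vol l'| <= 1.
    rewrite ger0_norm; last by apply: prodr_ge0 => j _; case/andP: (hl' j).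
    by apply: prodr_ile1 => j _; exact: hl'.
  lra.
have hE : E `|convpow_box k alpha a l - box_vol l| by exists a, l.
apply: le_trans (ub_le_sup hub hE).
apply: le_trans (ler_norm _); lra.
Qed.
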